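(* Let $n,\kappa\ge1$. For every $t>0$, the covering number of $\mathcal{S}_{1,2}\subset\mathbb{R}^{n^\kappa}$ satisfies $$\mathcal{N}(\mathcal{S}_{1,2},t)\le\Big(\Big(\frac{6\kappa}{t}\Big)^{\kappa n}+1\Big)^2.$$
   Context: $\mathcal{S}_1=\{\mathbf{u}^1\otimes\cdots\otimes\mathbf{u}^\kappa:\mathbf{u}^i\in\mathbb{S}^{n-1}\}\subset\mathbb{R}^{n^\kappa}$ ($\otimes$ the Kronecker product), $\mathcal{S}_2=\{(\mathbf{x}+\mathbf{y})/\|\mathbf{x}+\mathbf{y}\|_2:\mathbf{x},\mathbf{y}\in\mathcal{S}_1,\langle\mathbf{x},\mathbf{y}\rangle=0\}$, $\mathcal{S}_{1,2}=\mathcal{S}_1\cup\mathcal{S}_2$. The covering number $\mathcal{N}(\mathcal{S},t)$ is the minimal cardinality of a subset of $\mathcal{S}$ such that every element of $\mathcal{S}$ is within Euclidean distance $t$ of an element of the subset. *)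

(* Defs.v *)
From HB Require Import structures.
From mathcomp Require Import all_boot all_order all_algebra.
From mathcomp Require Import mxtens.
From mathcomp Require Import all_classical all_reals ereal.
Set Implicit Arguments. Unset Strict Implicit. Unset Printing Implicit Defensive.
Import Order.TTheory GRing.Theory Num.Theory.
Local Open Scope ring_scope.
Local Open Scope classical_set_scope.

Section Defs.
Variable R : realType.

Definition inner (m : nat) (x y : 'rV[R]_m) : R := \sum_(j < m) x 0 j * y 0 j.
Definition l2norm (m : nat) (x : 'rV[R]_m) : R := Num.sqrt (inner x x).

Fixpoint kronprod (n k : nat) (u : nat -> 'rV[R]_n) : 'rV[R]_(n ^ k) :=
  match k return 'rV[R]_(n ^ k) with
  | 0 => const_mx 1
  | k'.+1 => castmx (muln1 1%N, esym (expnS n k'))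
               (tensmx (u 0%N) (kronprod k' (fun i => u i.+1)))
  end.

Definition S1 (n kappa : nat) : set 'rV[R]_(n ^ kappa) :=
  [set x : 'rV[R]_(n ^ kappa) | exists u : nat -> 'rV[R]_n,
     (forall i, (i < kappa)%N -> l2norm (u i) = 1) /\ x = kronprod kappa u].

Definition S2 (n kappa : nat) : set 'rV[R]_(n ^ kappa) :=
  [set z | exists x y, @S1 n kappa x /\ @S1 n kappa y /\ inner x y = 0 /\
     z = (l2norm (x + y))^-1 *: (x + y)].

Definition S12 (n kappa : nat) : set 'rV[R]_(n ^ kappa) := @S1 n kappa `|` @S2 n kappa.

Definition is_net (m : nat) (S : set 'rV[R]_m) (t : R) (C : seq 'rV[R]_m) :=
  uniq C /\ (forall c, c \in C -> S c) /\
  (forall x, S x -> exists2 c, c \in C & l2norm (x - c) <= t).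

(* Covering number: minimal cardinality of such a net (+oo if none exists). *)
Definition covering_number (m : nat) (S : set 'rV[R]_m) (t : R) : \bar R :=
  ereal_inf [set ((size C)%:R)%:E | C in is_net S t].

End Defs.

(* Main.v *)
Require Import Defs.
From HB Require Import structures.
From mathcomp Require Import all_boot all_order all_algebra.
From mathcomp Require Import all_classical all_reals ereal.
From mathcomp Require Import mxtens ring lra.
From mathcomp Require Import all_analysis measurable_realfun.
Import Order.TTheory GRing.Theory Num.Theory.
Local Open Scope ring_scope.
Local Open Scope classical_set_scope.
Section Vol.
Variable R : realType.
Local Notation mu := (@lebesgue_measure R).
Local Open Scope ereal_scope.

Lemma pushforward_shift (a : R) (mg : measurable_fun setT (fun x : R => x + a)%R) A :
  measurable A -> pushforward mu ((fun x : R => x + a)%R : R -> measurableTypeR R) A = mu A.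
Proof.
move=> mA; apply/esym/lebesgue_measure_unique => //.
move=> X /ocitvP[->|[[x1 x2]/= x12 ->]]; first by rewrite !measure0.
rewrite /pushforward.
have -> : (fun x : R => x + a)%R @^-1` `]x1, x2]%classic = `](x1 - a)%R, (x2 - a)%R]%classic.
  by apply/seteqP; split => x /=; rewrite !in_itv/= lerBrDr ltrBlDr.
rewrite !lebesgue_measure_itv/= !lte_fin ltrD2r x12; congr (_ %:E); lra.
Qed.

Lemma integral_shift (f : R -> \bar R) (a : R) :
  measurable_fun setT f -> (forall x, 0 <= f x) ->
  \int[mu]_x f (x + a)%R = \int[mu]_x f x.
Proof.
move=> mf f0.
have mg : measurable_fun setT (fun x : R => x + a)%R.
  by apply: measurable_funD => //; exact: measurable_cst.
rewrite -[RHS](@eq_measure_integral _ _ _ _ _ (pushforward mu ((fun x : R => x + a)%R : R -> measurableTypeR R))); last first.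
  by move=> A mA _; apply: pushforward_shift.
rewrite ge0_integral_pushforward //.
Qed.

Lemma integral_scale (f : R -> \bar R) (l : R) (l0 : (0 < l)%R) :
  measurable_fun setT f -> (forall x, 0 <= f x) ->
  \int[mu]_x f x = l%:E * \int[mu]_x f (l * x)%R.
Proof.
move=> mf f0.
have mg : measurable_fun setT ((fun x : R => l * x)%R : R -> measurableTypeR R).
  by apply: measurable_funM => //; exact: measurable_cst.
pose k : {nonneg R} := NngNum (ltW l0).
pose pf := measure_function_pushforward__canonical__measure_function_Measure
   (f:=((fun x : R => l * x)%R : R -> measurableTypeR R)) mu mg.
have Hi : forall X, ocitv X -> mu X = mscale k pf X.
  move=> X /ocitvP[->|[[x1 x2]/= x12 ->]]; first by rewrite !measure0.
  rewrite /mscale /=; unfold pushforward.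
  have -> : (fun x : R => l * x)%R @^-1` `]x1, x2]%classic = `](x1 / l)%R, (x2 / l)%R]%classic.
    by apply/seteqP; split => x /=; rewrite !in_itv/= ltr_pdivrMr // ler_pdivlMr // [(x * l)%R]mulrC.
  rewrite !lebesgue_measure_itv/= !lte_fin ltr_pM2r ?invr_gt0 // x12 -EFinM; congr (_ %:E).
  field; exact: lt0r_neq0.
have E := lebesgue_measure_unique Hi.
transitivity (\int[mscale k pf]_x f x).
  by apply: eq_measure_integral => A mA _; apply: E.
rewrite ge0_integral_mscale //=.
congr (_ * _).
exact: ge0_integral_pushforward.
Qed.

Lemma nd_emeasurable (f : R -> \bar R) :
  (forall s t, (s <= t)%R -> f s <= f t) -> measurable_fun setT f.
Proof.
move=> f_nd.
apply: (measurability _ (ErealGenCInfty.measurableE R)) => //.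
move=> _ [_ [r ->] <-].
apply: measurableI => //; apply: is_interval_measurable => s t/=.
rewrite !in_itv/= !andbT => fs ft u /andP[su ut].
by rewrite in_itv/= andbT (le_trans fs)// f_nd.
Qed.

Fixpoint phi (m : nat) (s : R) : \bar R :=
  if m is m'.+1 then \int[mu]_y phi m' (s - y ^+ 2)%R
  else (if (0 < s)%R then 1 else 0).

Lemma poly_meas (s a : R) : measurable_fun setT (fun y : R => s - (y - a) ^+ 2)%R.
Proof.
apply: measurable_funB => //; apply: measurable_funX.
by apply: measurable_funB => //; exact: measurable_cst.
Qed.

Lemma phi_props m : [/\ (forall s, 0 <= phi m s),
  (forall s t, (s <= t)%R -> phi m s <= phi m t) &
  (forall s, (s <= 0)%R -> phi m s = 0)].
Proof.
elim: m => [|m [IH0 IH1 IH2]].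
  split; first by move=> s /=; case: ifP.
    by move=> s t st /=; case: ifP => s0; case: ifP => t0 //; rewrite (lt_le_trans s0 st) in t0.
  by move=> s s0 /=; rewrite ltNge s0.
have mc : forall s a, measurable_fun setT (fun y : R => phi m (s - (y - a) ^+ 2)%R).
  move=> s a; apply: (measurableT_comp (f := phi m)); first exact: nd_emeasurable.
  exact: poly_meas.
have mc0 : forall s, measurable_fun setT (fun y : R => phi m (s - y ^+ 2)%R).
  move=> s; have := mc s 0%R; apply: eq_measurable_fun => y _; by rewrite subr0.
split; first by move=> s /=; apply: integral_ge0 => y _; exact: IH0.
  move=> s t st /=; apply: ge0_le_integral => //;
    [exact: mc0 | exact: mc0 | by move=> y _; apply: IH1; rewrite lerD2r].
move=> s s0 /=; rewrite (eq_integral (fun _ => 0)); first by rewrite integral0.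
move=> y _; apply: IH2; rewrite subr_le0 (le_trans s0) //; exact: sqr_ge0.
Qed.

Lemma phi_ge0 m s : 0 <= phi m s.
Proof. by case: (phi_props m) => H _ _; exact: H. Qed.
Lemma phi_nd m s t : (s <= t)%R -> phi m s <= phi m t.
Proof. by case: (phi_props m) => _ H _; exact: H. Qed.
Lemma phi_le0 m s : (s <= 0)%R -> phi m s = 0.
Proof. by case: (phi_props m) => _ _ H; exact: H. Qed.

Lemma phi_meas m s a : measurable_fun setT (fun y : R => phi m (s - (y - a) ^+ 2)%R).
Proof.
apply: (measurableT_comp (f := phi m)); first by apply: nd_emeasurable => *; exact: phi_nd.
exact: poly_meas.
Qed.

Lemma phi_meas0 m s : measurable_fun setT (fun y : R => phi m (s - y ^+ 2)%R).
Proof. by have := phi_meas m s 0%R; apply: eq_measurable_fun => y _; rewrite subr0. Qed.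

Lemma phi_shift m s a : \int[mu]_y phi m (s - (y - a) ^+ 2)%R = phi m.+1 s.
Proof.
rewrite /= -(integral_shift (fun y => phi m (s - y ^+ 2)%R) (- a)) //.
- exact: phi_meas0.
- by move=> y; exact: phi_ge0.
Qed.

Lemma phi_hom m (l s : R) : (0 < l)%R -> phi m (l ^+ 2 * s)%R = (l ^+ m)%:E * phi m s.
Proof.
move=> l0; elim: m s => [|m IH] s /=.
  by rewrite expr0 mul1e pmulr_rgt0 // exprn_gt0.
rewrite (@integral_scale _ l l0); last 2 first.
- exact: phi_meas0.
- by move=> y; exact: phi_ge0.
rewrite (_ : \int[mu]_x phi m (l ^+ 2 * s - (l * x) ^+ 2)%R = \int[mu]_x ((l ^+ m)%:E * phi m (s - x ^+ 2)%R)); last first.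
  by apply: eq_integral => y _; rewrite -IH; congr (phi m _); rewrite exprMn mulrBr.
rewrite ge0_integralZl //; first by rewrite muleA -EFinM exprS.
all: try exact: phi_meas0.
all: try (by move=> y _; exact: phi_ge0).
all: by rewrite lee_fin exprn_ge0 // ltW.
Qed.

Definition ind (a b : R) : R -> R := \1_(`]a, b[%classic : set R).

Lemma indic_itv_meas (a b : R) :
  measurable_fun setT (fun y : R => (ind a b y)%:E).
Proof. by apply/measurable_EFinP; exact: measurable_indic. Qed.

Lemma int_indic_itv (c a b : R) : (0 <= c)%R -> (a < b)%R ->
  \int[mu]_y (c%:E * (ind a b y)%:E) = (c * (b - a))%:E.
Proof.
move=> c0 ab; rewrite ge0_integralZl //; last 2 first.
- exact: indic_itv_meas.
- by move=> y _; rewrite lee_fin /ind indicE.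
rewrite /ind integral_indic // setIT EFinM; congr (_ * _).
have H := @lebesgue_measure_itv R `]a, b[%R; rewrite /= lte_fin ab in H.
exact: H.
Qed.

Lemma phi_fin m : phi m 1 < +oo.
Proof.
elim: m => [|m IH] /=; first by rewrite ltr01 ltry.
have c0 : (0 <= fine (phi m 1))%R by apply: fine_ge0; exact: phi_ge0.
have cE : phi m 1 = (fine (phi m 1))%:E.
  by rewrite fineK // ge0_fin_numE //; exact: phi_ge0.
apply: (@le_lt_trans _ _ (\int[mu]_y ((fine (phi m 1))%:E * (ind (-1) 1 y)%:E))).
  apply: ge0_le_integral => //.
  - by move=> y _; exact: phi_ge0.
  - exact: phi_meas0.
  - by apply: measurable_funeM; exact: indic_itv_meas.
  move=> y _; rewrite /ind indicE -cE; case: (boolP (y \in _)) => [|/negP yA].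
    by move=> _; rewrite mule1; apply: phi_nd; rewrite lerBlDr lerDl sqr_ge0.
  rewrite mule0 phi_le0 // subr_le0; apply: contra_notP yA => /negP; rewrite -ltNge => y1.
  rewrite inE /= in_itv /=; apply/andP; split; nra.
by rewrite int_indic_itv // ?ltry //; lra.
Qed.

Lemma phi_pos m : 0 < phi m 1.
Proof.
elim: m => [|m IH] /=; first by rewrite ltr01 lte01.
have c0 : (0 < fine (phi m 1))%R.
  by apply: fine_gt0; rewrite IH phi_fin.
have E : phi m (1/4)%R = (((1/2) ^+ m * fine (phi m 1)))%:E.
  rewrite (_ : (1/4)%R = ((1/2)^+2 * 1)%R); last by field.
  by rewrite phi_hom ?divr_gt0 // EFinM fineK // ge0_fin_numE ?phi_fin // phi_ge0.
apply: (@lt_le_trans _ _ (\int[mu]_y (((1/2) ^+ m * fine (phi m 1))%:E * (ind (-(1/2)) (1/2) y)%:E))).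
  rewrite int_indic_itv; last 2 first.
  - by rewrite mulr_ge0 // ?exprn_ge0 // ltW.
  - lra.
  rewrite lte_fin; apply: mulr_gt0; [apply: mulr_gt0 => //; apply: exprn_gt0; lra | lra].
apply: ge0_le_integral => //.
- move=> y _; rewrite mule_ge0 // lee_fin ?indicE //.
  by rewrite mulr_ge0 // ?exprn_ge0 // ltW.
- by apply: measurable_funeM; exact: indic_itv_meas.
- exact: phi_meas0.
move=> y _; rewrite /ind indicE -E; case: (boolP (y \in _)) => [|_].
  rewrite inE /= in_itv /= => /andP[y1 y2]; rewrite mule1; apply: phi_nd; nra.
by rewrite mule0 phi_ge0.
Qed.


Local Close Scope ereal_scope.
Definition sqd {m} (x c : 'rV[R]_m) : R := inner (x - c) (x - c).

Lemma sqdE m (x c : 'rV[R]_m) : sqd x c = (\sum_j (x 0 j - c 0 j) ^+ 2)%R.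
Proof. by rewrite /sqd /inner; apply: eq_bigr => j _; rewrite !mxE expr2. Qed.

Definition rinit {m} (c : 'rV[R]_m.+1) : 'rV[R]_m := \row_k c 0 (lift ord_max k).
Definition rext {m} (x : 'rV[R]_m) (y : R) : 'rV[R]_m.+1 :=
  \row_j (if unlift ord_max j is Some k then x 0 k else y).

Lemma sqd_ext m (x : 'rV[R]_m) y (c : 'rV[R]_m.+1) :
  sqd (rext x y) c = (sqd x (rinit c) + (y - c 0 ord_max) ^+ 2)%R.
Proof.
rewrite !sqdE big_ord_recr /=; congr (_ + _)%R.
  apply: eq_bigr => i _.
  have -> : widen_ord (leqnSn m) i = lift ord_max i by apply: val_inj; rewrite /= /bump leqNgt ltn_ord.
  by rewrite !mxE liftK.
by rewrite !mxE unlift_none.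
Qed.

Local Open Scope ereal_scope.
Lemma sum_phi0 (bs : seq ('rV[R]_0 * R)) :
  \sum_(b <- bs) phi 0 b.2 = ((count (fun b : 'rV[R]_0 * R => (0 < b.2)%R) bs)%:R)%:E.
Proof.
elim: bs => [|b bs IH]; first by rewrite big_nil.
rewrite big_cons IH /=; case: ifP => _; last by rewrite add0e.
by rewrite -EFinD natrD.
Qed.

Lemma pack m (bs : seq ('rV[R]_m * R)) (C : 'rV[R]_m) (S : R) :
  (forall x, (count (fun b => sqd x b.1 < b.2)%R bs <= (sqd x C < S)%R)%N) ->
  \sum_(b <- bs) phi m b.2 <= phi m S.
Proof.
elim: m bs C S => [|m IH] bs C S H.
  have sq0 : forall x c : 'rV[R]_0, sqd x c = 0%R by move=> x c; rewrite sqdE big_ord0.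
  have := H 0%R; rewrite sum_phi0 sq0.
  under eq_count do rewrite sq0.
  rewrite /=; case: ifP => _ hc.
    by rewrite (_ : 1 = 1%:R%:E) // lee_fin ler_nat.
  by rewrite (_ : 0 = 0%:R%:E) // lee_fin ler_nat.
have Hy : forall y, \sum_(b <- bs) phi m (b.2 - (y - b.1 0 ord_max) ^+ 2)%R
    <= phi m (S - (y - C 0 ord_max) ^+ 2)%R.
  move=> y.
  have := IH [seq (rinit b.1, b.2 - (y - b.1 0 ord_max) ^+ 2)%R | b <- bs] (rinit C) (S - (y - C 0 ord_max) ^+ 2)%R.
  rewrite big_map; apply => x.
  rewrite count_map; have := H (rext x y); rewrite sqd_ext.
  rewrite ltrBrDr.
  suff -> : count (preim (fun b => (rinit b.1, b.2 - (y - b.1 0%R ord_max) ^+ 2)%R)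
      (fun b => (sqd x b.1 < b.2)%R)) bs =
    count (fun b => (sqd (rext x y) b.1 < b.2)%R) bs by [].
  by apply: eq_count => b /=; rewrite sqd_ext ltrBrDr.
rewrite -(phi_shift m S (C 0%R ord_max)).
under eq_bigr => b _ do rewrite -(phi_shift m b.2 (b.1 0%R ord_max)).
rewrite -ge0_integral_sum //; last 2 first.
- by move=> b; exact: phi_meas.
- by move=> b y _; exact: phi_ge0.
apply: ge0_le_integral => //.
all: try (by move=> y _; apply: sume_ge0 => b _; exact: phi_ge0).
all: try (by apply: emeasurable_sum => b; exact: phi_meas).
all: try exact: phi_meas.
Qed.


Local Close Scope ereal_scope.

Lemma sqr_par (a b c : R) : (a - b) ^+ 2 <= 2 * (c - a) ^+ 2 + 2 * (c - b) ^+ 2.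
Proof.
have h := sqr_ge0 (2 * c - a - b).
have -> : 2 * (c - a) ^+ 2 + 2 * (c - b) ^+ 2 = (a - b) ^+ 2 + (2 * c - a - b) ^+ 2 by ring.
lra.
Qed.

Lemma sqd_par m (x p q : 'rV[R]_m) : sqd p q <= 2 * sqd x p + 2 * sqd x q.
Proof.
rewrite !sqdE !mulr_sumr -big_split /=; apply: ler_sum => j _; exact: sqr_par.
Qed.

Lemma sqr_w (a b t : R) : 0 < t -> (a + b) ^+ 2 <= (1 + t) * a ^+ 2 + (1 + t^-1) * b ^+ 2.
Proof.
move=> t0; have h : 0 <= (t * a - b) ^+ 2 / t by rewrite divr_ge0 // ?sqr_ge0 // ltW.
have E : (t * a - b) ^+ 2 / t = t * a ^+ 2 - 2 * a * b + b ^+ 2 / t.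
  by field; exact: lt0r_neq0.
rewrite E in h.
have -> : (1 + t^-1) * b ^+ 2 = b ^+ 2 + b ^+ 2 / t by rewrite mulrDl mul1r mulrC.
nra.
Qed.

Arguments sqd_par {m}.

Lemma sqd_w m (x p : 'rV[R]_m) (t : R) : 0 < t ->
  sqd x 0 <= (1 + t) * sqd p 0 + (1 + t^-1) * sqd x p.
Proof.
move=> t0; rewrite !sqdE !mulr_sumr -big_split /=; apply: ler_sum => j _.
rewrite !mxE !subr0 (_ : x 0 j = p 0 j + (x 0 j - p 0 j)); last by rewrite addrC subrK.
rewrite (_ : (p 0 j + (x 0 j - p 0 j) - p 0 j) = x 0 j - p 0 j); last by ring.
by rewrite sqr_w.
Qed.

Arguments sqd_w {m}.

Lemma sep_count m (e : R) (L : seq 'rV[R]_m) (x : 'rV[R]_m) : 0 < e ->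
  (forall p, p \in L -> sqd p 0 = 1) ->
  pairwise (fun p q => e ^+ 2 <= sqd p q) L ->
  (count (fun p => (sqd x p < e ^+ 2 / 4)%R) L <= (sqd x 0 < (1 + e / 2) ^+ 2)%R)%N.
Proof.
move=> e0 unit; elim: L unit => [|p L IH] unit /=; first by [].
move=> /andP[allp pL].
have {}IH := IH (fun q qL => unit q (@mem_behead _ (p :: L) _ qL)) pL.
case xp: (sqd x p < e ^+ 2 / 4)%R => /=.
  have -> : count (fun p0 => (sqd x p0 < e ^+ 2 / 4)%R) L = 0%N.
    apply/eqP; rewrite -leqn0 leqNgt -has_count; apply/negP => /hasP[q qL xq].
    move/allP: allp => /(_ q qL) /=; apply/negP; rewrite -ltNge.
    apply: (le_lt_trans (sqd_par x p q)); lra.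
  rewrite addn0 lt0b; apply: (le_lt_trans (sqd_w x p (e / 2) _)).
    by rewrite divr_gt0.
  have -> : sqd p 0 = 1 by apply: unit; rewrite mem_head.
  have e2 : 0 < e / 2 by rewrite divr_gt0.
  have -> : (e / 2)^-1 = 2 / e by rewrite invf_div.
  have h : (1 + 2 / e) * sqd x p < (1 + 2 / e) * (e ^+ 2 / 4).
    by rewrite ltr_pM2l // addr_gt0 // divr_gt0.
  suff : (1 + 2 / e) * (e ^+ 2 / 4) = e / 2 + e ^+ 2 / 4 by nra.
  by field; exact: lt0r_neq0.
by rewrite add0n.
Qed.

Local Open Scope ereal_scope.

Lemma sum_cst_seq (T : Type) (L : seq T) (c : R) :
  \sum_(p <- L) c%:E = ((size L)%:R * c)%:E.
Proof.
elim: L => [|p L IH]; first by rewrite big_nil mul0r.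
by rewrite big_cons IH /= -EFinD -addn1 natrD mulrDl mul1r addrC.
Qed.

Lemma sep_size m (e : R) (L : seq 'rV[R]_m) : (0 < e)%R ->
  (forall p, p \in L -> sqd p 0 = 1%R) ->
  pairwise (fun p q => e ^+ 2 <= sqd p q)%R L ->
  ((size L)%:R <= (1 + 2 / e) ^+ m)%R.
Proof.
move=> e0 unit sep.
have := @pack m [seq (p, (e ^+ 2 / 4)%R) | p <- L] 0%R ((1 + e / 2) ^+ 2)%R.
rewrite big_map /=.
have c0 : (0 < fine (phi m 1))%R by apply: fine_gt0; rewrite phi_pos phi_fin.
have cE : phi m 1 = (fine (phi m 1))%:E.
  by rewrite fineK // ge0_fin_numE ?phi_fin //; exact: phi_ge0.
have -> : phi m (e ^+ 2 / 4)%R = (((e / 2) ^+ m * fine (phi m 1)))%:E.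
  rewrite (_ : (e ^+ 2 / 4)%R = ((e / 2) ^+ 2 * 1)%R); last by field.
  by rewrite phi_hom ?divr_gt0 // cE -EFinM.
have -> : phi m ((1 + e / 2) ^+ 2)%R = (((1 + e / 2) ^+ m * fine (phi m 1)))%:E.
  rewrite -[X in phi m X]mulr1 phi_hom; last by rewrite addr_gt0 // divr_gt0.
  by rewrite cE -EFinM.
rewrite sum_cst_seq lee_fin.
have e2 : (0 < e / 2)%R by rewrite divr_gt0.
move=> /(_ _) H.
have {H} H : ((size L)%:R * ((e / 2) ^+ m * fine (phi m 1)) <= (1 + e / 2) ^+ m * fine (phi m 1))%R.
  apply: H => x; rewrite count_map; exact: sep_count.
rewrite mulrA ler_pM2r // in H.
have em : (0 < (e / 2) ^+ m)%R by rewrite exprn_gt0.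
rewrite -(ler_pM2r em) -exprMn.
have -> : ((1 + 2 / e) * (e / 2) = 1 + e / 2)%R by field; exact: lt0r_neq0.
exact: H.
Qed.


Lemma sphere_net m (e : R) : (0 < e)%R -> exists L : seq 'rV[R]_m,
  [/\ (forall p, p \in L -> sqd p 0 = 1%R), ((size L)%:R <= (1 + 2 / e) ^+ m)%R &
      (forall x, sqd x 0 = 1%R -> exists2 p, p \in L & (sqd x p < e ^+ 2)%R)].
Proof.
move=> e0; apply: contrapT => nex.
have grow : forall k, exists L : seq 'rV[R]_m, [/\ (forall p, p \in L -> sqd p 0 = 1%R),
    pairwise (fun p q => e ^+ 2 <= sqd p q)%R L & size L = k].
  elim => [|k [L [unit sep sz]]]; first by exists [::].
  have : ~ (forall x, sqd x 0 = 1%R -> exists2 p, p \in L & (sqd x p < e ^+ 2)%R).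
    by move=> cov; apply: nex; exists L; split => //; exact: sep_size.
  move=> /existsNP [x] /not_implyP [x1 /forall2NP nc].
  exists (x :: L); split => //=.
  - by move=> p; rewrite inE => /orP[/eqP -> //|]; exact: unit.
  - rewrite sep andbT; apply/allP => q qL; rewrite leNgt; apply/negP => xq.
    by case: (nc q) => // /negP; rewrite xq.
  - by rewrite sz.
have := @archi_boundP R ((1 + 2 / e) ^+ m)%R.
set K := Num.Def.archi_bound _ => /(_ _) H.
have {H} H : ((1 + 2 / e) ^+ m < K%:R)%R.
  by apply: H; rewrite exprn_ge0 // addr_ge0 // divr_ge0 // ltW.
have [L [unit sep sz]] := grow K.
have := @sep_size m e L e0 unit sep; rewrite sz => /(le_lt_trans)/(_ H).
by rewrite ltxx.
Qed.


Local Close Scope ereal_scope.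

Lemma sqd_sym {m} (x y : 'rV[R]_m) : sqd x y = sqd y x.
Proof. by rewrite !sqdE; apply: eq_bigr => j _; rewrite -sqrrN opprB. Qed.

Lemma sqd_ge0 {m} (x y : 'rV[R]_m) : 0 <= sqd x y.
Proof. by rewrite sqdE; apply: sumr_ge0 => j _; exact: sqr_ge0. Qed.

Lemma l2norm_le {m} (x c : 'rV[R]_m) (t : R) : 0 <= t -> sqd x c <= t ^+ 2 -> l2norm (x - c) <= t.
Proof.
move=> t0 h; rewrite /l2norm -[X in _ <= X](ger0_norm t0) -sqrtr_sqr.
by rewrite ler_sqrt // sqr_ge0.
Qed.

Lemma cover_rep m (S : set 'rV[R]_m) (Q : seq 'rV[R]_m) (r t : R) :
  0 <= r -> 2 * r <= t ->
  (forall x, S x -> exists2 q, q \in Q & sqd x q <= r ^+ 2) ->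
  (covering_number S t <= ((size Q)%:R)%:E)%E.
Proof.
move=> r0 rt cov.
pose f (q : 'rV[R]_m) : option 'rV[R]_m :=
  if pselect (exists x, S x /\ sqd x q <= r ^+ 2) is left h then Some (projT1 (cid h)) else None.
have fP : forall q c, f q = Some c -> S c /\ sqd c q <= r ^+ 2.
  move=> q c; rewrite /f; case: pselect => // h [<-]; case: cid => /= y [].
  by split.
pose C := undup (pmap f Q).
have netC : is_net S t C.
  split; first exact: undup_uniq.
  split.
    move=> c; rewrite mem_undup mem_pmap => /mapP[q _ /esym fq].
    by case: (fP _ _ fq).
  move=> x Sx; case: (cov x Sx) => q qQ xq.
  have : exists y, S y /\ sqd y q <= r ^+ 2 by exists x.
  case E : (f q) => [c|]; last first.
    by move: E; rewrite /f; case: pselect.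
  move=> _; exists c.
    by rewrite mem_undup mem_pmap; apply/mapP; exists q.
  have [_ cq] := fP _ _ E.
  apply: l2norm_le; first by apply: le_trans rt; rewrite mulr_ge0.
  apply: (le_trans (sqd_par q x c)); rewrite (sqd_sym q x) (sqd_sym q c).
  have t2 : (2 * r) ^+ 2 <= t ^+ 2 by rewrite ler_sqr // ?nnegrE ?mulr_ge0 // (le_trans _ rt) // mulr_ge0.
  nra.
apply: (@le_trans _ _ ((size C)%:R)%:E).
  by apply: ereal_inf_lbound; exists C.
rewrite lee_fin ler_nat; apply: (leq_trans (size_undup _)).
by rewrite size_pmap count_size.
Qed.


Lemma inner_sym {m} (x y : 'rV[R]_m) : inner x y = inner y x.
Proof. by rewrite /inner; apply: eq_bigr => j _; rewrite mulrC. Qed.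

Lemma sqd_inner {m} (x y : 'rV[R]_m) : sqd x y = inner x x - 2 * inner x y + inner y y.
Proof.
rewrite sqdE /inner mulr_sumr -sumrB -big_split /=; apply: eq_bigr => j _.
by rewrite sqrrB; ring.
Qed.

Lemma inner_castmx p p' (e : ((1 * 1 = 1)%N * (p = p'))%type) (x y : 'M[R]_(1 * 1, p)) :
  inner (castmx e x) (castmx e y) = inner (x : 'rV_p) y.
Proof.
case: e => e1 e2; case: p' / e2.
by rewrite (eq_irrelevance e1 (erefl _)) !castmx_id.
Qed.

Lemma inner_tens p q (a c : 'rV[R]_p) (b d : 'rV[R]_q) :
  inner ((tensmx a b : 'M[R]_(1 * 1, p * q)) : 'rV[R]_(p * q)) (tensmx c d) = inner a c * inner b d.
Proof.
rewrite /inner mulr_sum; apply: eq_bigr => j _.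
rewrite !mxE.
have h : forall i : 'I_1, i = 0 := fun i => ord1 i.
rewrite !(h (mxtens_unindex _).1) !(h (mxtens_unindex _).2).
ring.
Qed.

Lemma inner_kron n k (u v : nat -> 'rV[R]_n) :
  inner (kronprod k u) (kronprod k v) = \prod_(i < k) inner (u i) (v i).
Proof.
elim: k u v => [|k IH] u v /=.
  by rewrite big_ord0 /inner big_ord1 !mxE mulr1.
by rewrite inner_castmx inner_tens IH big_ord_recl.
Qed.


Lemma inner_ge0 {m} (x : 'rV[R]_m) : 0 <= inner x x.
Proof. by rewrite /inner; apply: sumr_ge0 => j _; rewrite -expr2 sqr_ge0. Qed.

Lemma inner_addsq {m} (x y : 'rV[R]_m) : 0 <= inner x x + 2 * inner x y + inner y y.
Proof.
rewrite /inner mulr_sumr -!big_split /=; apply: sumr_ge0 => j _.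
by have := sqr_ge0 (x 0 j + y 0 j); rewrite sqrrD; nra.
Qed.

Lemma inner_unit {m} (x : 'rV[R]_m) : l2norm x = 1 -> inner x x = 1.
Proof.
move=> h; rewrite -[inner x x]sqr_sqrtr ?inner_ge0 //.
by rewrite /l2norm in h; rewrite h expr1n.
Qed.

Lemma inner_bnd {m} (x y : 'rV[R]_m) : inner x x = 1 -> inner y y = 1 ->
  -1 <= inner x y <= 1.
Proof.
move=> hx hy; have h1 := sqd_ge0 x y; rewrite sqd_inner hx hy in h1.
have h2 := inner_addsq x y; rewrite hx hy in h2.
apply/andP; split; lra.
Qed.

Lemma prod_bnd k (a : nat -> R) : (forall i, (i < k)%N -> -1 <= a i <= 1) ->
  (-1 <= \prod_(i < k) a i <= 1) /\ (1 - \prod_(i < k) a i <= \sum_(i < k) (1 - a i)).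
Proof.
elim: k a => [|k IH] a ha.
  by rewrite big_ord0 big_ord0; split; [apply/andP; split; lra | lra].
rewrite big_ord_recl big_ord_recl /=.
have [/andP [p1 p2] s] := IH (fun i => a i.+1) (fun i hi => ha i.+1 hi).
have /andP [a1 a2] := ha 0%N isT.
set P := \prod_(i < k) _ in p1 p2 s *.
set Sm := \sum_(i < k) _ in s *.
split; first by apply/andP; split; nra.
nra.
Qed.

Lemma sqd_kron n k (u v : nat -> 'rV[R]_n) :
  (forall i, (i < k)%N -> inner (u i) (u i) = 1) ->
  (forall i, (i < k)%N -> inner (v i) (v i) = 1) ->
  sqd (kronprod k u) (kronprod k v) <= \sum_(i < k) sqd (u i) (v i).
Proof.
move=> hu hv.
have P1 : \prod_(i < k) inner (u i) (u i) = 1 by rewrite big1 // => i _; exact: hu.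
have P2 : \prod_(i < k) inner (v i) (v i) = 1 by rewrite big1 // => i _; exact: hv.
have S : \sum_(i < k) sqd (u i) (v i) = 2 * \sum_(i < k) (1 - inner (u i) (v i)).
  rewrite mulr_sumr; apply: eq_bigr => i _; rewrite sqd_inner hu ?hv //; ring.
rewrite sqd_inner !inner_kron P1 P2 S.
have [_ h] := @prod_bnd k (fun i => inner (u i) (v i)) (fun i hi => @inner_bnd _ _ _ (hu i hi) (hv i hi)).
lra.
Qed.


Fixpoint tups {n} (P : seq 'rV[R]_n) (k : nat) : seq (seq 'rV[R]_n) :=
  if k is k'.+1 then [seq p :: s | p <- P, s <- tups P k'] else [:: [::]].

Lemma size_tups {n} (P : seq 'rV[R]_n) k : size (tups P k) = (size P ^ k)%N.
Proof. by elim: k => [|k IH] //=; rewrite size_allpairs IH expnS. Qed.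

Lemma tups_mem {n} (P : seq 'rV[R]_n) k s : s \in tups P k ->
  size s = k /\ (forall p, p \in s -> p \in P).
Proof.
elim: k s => [|k IH] s /=; first by rewrite inE => /eqP ->.
move=> /allpairsP [[p s'] /= [pP s'T ->]].
have [sz hs] := IH _ s'T; split; first by rewrite /= sz.
by move=> q; rewrite inE => /orP [/eqP -> //|]; exact: hs.
Qed.

Lemma tups_approx {n} (P : seq 'rV[R]_n) (e : R) k :
  (forall x, sqd x 0 = 1 -> exists2 p, p \in P & sqd x p < e ^+ 2) ->
  forall u : nat -> 'rV[R]_n, (forall i, (i < k)%N -> inner (u i) (u i) = 1) ->
  exists2 s, s \in tups P k & forall i, (i < k)%N -> sqd (u i) (nth 0 s i) < e ^+ 2.
Proof.
move=> hP; elim: k => [|k IH] u hu; first by exists [::] => //; rewrite inE.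
have [s sT hs] := IH (fun i => u i.+1) (fun i hi => hu i.+1 hi).
have [p pP hp] : exists2 p, p \in P & sqd (u 0%N) p < e ^+ 2.
  by apply: hP; rewrite /sqd subr0; exact: hu.
exists (p :: s); first by apply/allpairsP; exists (p, s).
by case => [|i] //= hi; exact: hs.
Qed.

Lemma inner_addE {m} (x y : 'rV[R]_m) :
  inner (x + y) (x + y) = inner x x + 2 * inner x y + inner y y.
Proof.
rewrite /inner mulr_sumr -!big_split /=; apply: eq_bigr => j _; rewrite !mxE; ring.
Qed.

Lemma inner_par {m} (x y : 'rV[R]_m) :
  inner (x + y) (x + y) <= 2 * inner x x + 2 * inner y y.
Proof.
rewrite /inner !mulr_sumr -!big_split /=; apply: ler_sum => j _; rewrite !mxE.
have := sqr_ge0 (x 0 j - y 0 j); nra.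
Qed.

Lemma inner_scale {m} (c : R) (x : 'rV[R]_m) :
  inner (c *: x) (c *: x) = c ^+ 2 * inner x x.
Proof. by rewrite /inner mulr_sumr; apply: eq_bigr => j _; rewrite !mxE; ring. Qed.

Lemma S1_unit {n k} {x : 'rV[R]_(n ^ k)} : S1 x -> inner x x = 1.
Proof.
move=> [u [hu ->]]; rewrite inner_kron big1 // => i _; apply: inner_unit; exact: hu.
Qed.

Lemma S12_unit n k (z : 'rV[R]_(n ^ k)) : S12 z -> inner z z = 1.
Proof.
case=> [/S1_unit //|[x [y [Sx [Sy [xy ->]]]]]].
have h2 : inner (x + y) (x + y) = 2 by rewrite inner_addE xy (S1_unit Sx) (S1_unit Sy); ring.
rewrite inner_scale /l2norm h2 exprVn sqr_sqrtr; last by [].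
by rewrite mulVf.
Qed.


Lemma powle (a b : R) k : 0 <= a -> a <= b -> a ^+ k <= b ^+ k.
Proof.
move=> a0 ab; apply: lerXn2r => //; rewrite nnegrE //; exact: le_trans ab.
Qed.

Lemma main n kappa t : (1 <= n)%N -> (1 <= kappa)%N -> 0 < t ->
  (covering_number (@S12 R n kappa) t <=
   ((((6 * kappa%:R) / t) ^+ (kappa * n) + 1) ^+ 2)%:E)%E.
Proof.
move=> n1 k1 t0.
set X := ((6 * kappa%:R) / t) ^+ (kappa * n).
have X0 : 0 <= X by rewrite exprn_ge0 // divr_ge0 // ?mulr_ge0 // ltW.
have unitS : forall z, S12 z -> inner z z = 1 := fun z => @S12_unit n kappa z.
have t0' : 0 <= t := ltW t0.
case: (leP 2 t) => [t2|t2].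
  apply: (le_trans (@cover_rep _ _ [:: 0] 1 t ler01 _ _)).
  - by rewrite mulr1.
  - move=> z Sz; exists 0; first by rewrite mem_head.
    by rewrite /sqd subr0 unitS // expr1n.
  rewrite lee_fin /= expr2; nra.
case: (eqVneq kappa 1%N) => [k1e|k1n].
  subst kappa.
  have e0 : 0 < t / 2 by rewrite divr_gt0.
  have [L [Lu Ls Lc]] := @sphere_net (n ^ 1) (t / 2) e0.
  apply: (le_trans (@cover_rep _ _ L (t / 2) t (ltW e0) _ _)).
  - lra.
  - move=> z Sz; have [p pL hp] : exists2 p, p \in L & sqd z p < (t / 2) ^+ 2.
      by apply: Lc; rewrite /sqd subr0; exact: unitS.
    by exists p => //; exact: ltW.
  rewrite lee_fin; apply: (le_trans Ls).
  rewrite expn1 /X mul1n mulr1.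
  set w := t^-1.
  have w0 : 0 < w by rewrite invr_gt0.
  have tw : t * w = 1 by rewrite mulfV // lt0r_neq0.
  have -> : 1 + 2 / (t / 2) = 1 + 4 * w by rewrite /w; field; exact: lt0r_neq0.
  have h1 : 1 + 4 * w <= (6 * w) ^+ 2 by rewrite expr2; nra.
  apply: (le_trans (@powle _ _ n _ h1)); first by rewrite addr_ge0 // mulr_ge0 // ltW.
  rewrite -exprM mulnC exprM.
  apply: powle; first by rewrite exprn_ge0 // mulr_ge0 // ltW.
  have : 0 <= (6 * w) ^+ n by rewrite exprn_ge0 // mulr_ge0 // ltW.
  lra.
have k2 : (2 <= kappa)%N by rewrite ltn_neqAle eq_sym k1n k1.
set K := kappa%:R : R.
have K2 : 2 <= K by rewrite /K (ler_nat R 2 kappa).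
have K0 : 0 < K by lra.
set e := t / (2 * K).
have e0 : 0 < e by rewrite divr_gt0 // mulr_gt0.
have [P [Pu Ps Pc]] := @sphere_net n e e0.
pose T := tups P kappa.
pose A := [seq kronprod kappa (fun i => nth 0 s i) | s <- T].
pose Q := A ++ [seq (Num.sqrt 2)^-1 *: (a + b) | a <- A, b <- A].
have ke : K * e ^+ 2 <= (t / 2) ^+ 2 / 2.
  have -> : K * e ^+ 2 = t ^+ 2 / (4 * K) by rewrite /e; field; lra.
  rewrite ler_pdivrMr ?mulr_gt0 //.
  have -> : (t / 2) ^+ 2 / 2 * (4 * K) = t ^+ 2 * (K / 2) by field.
  have : 1 <= K / 2 by rewrite ler_pdivlMr //; lra.
  have := sqr_ge0 t; nra.
have approx : forall u : nat -> 'rV[R]_n, (forall i, (i < kappa)%N -> l2norm (u i) = 1) ->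
    exists2 a, a \in A & sqd (kronprod kappa u) a <= K * e ^+ 2.
  move=> u hu.
  have [s sT hs] := @tups_approx _ P e kappa Pc u (fun i hi => @inner_unit _ _ (hu i hi)).
  exists (kronprod kappa (fun i => nth 0 s i)); first by apply: map_f.
  have [sz sP] := @tups_mem _ _ _ _ sT.
  apply: (le_trans (@sqd_kron _ _ _ _ _ _)).
  - by move=> i hi; apply: inner_unit; exact: hu.
  - move=> i hi; have : nth 0 s i \in P by apply: sP; apply: mem_nth; rewrite sz.
    by move/Pu; rewrite /sqd subr0.
  apply: (@le_trans _ _ (\sum_(i < kappa) e ^+ 2)).
    by apply: ler_sum => i _; apply: ltW; apply: hs.
  by rewrite sumr_const card_ord mulr_natl.
apply: (le_trans (@cover_rep _ _ Q (t / 2) t _ _ _)).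
- by rewrite divr_ge0.
- lra.
- move=> z [Sz|[x [y [Sx [Sy [xy ->]]]]]].
    case: Sz => u [hu ->]; have [a aA ha] := approx u hu.
    exists a; first by rewrite mem_cat aA.
    apply: (le_trans ha); apply: (le_trans ke).
    have := sqr_ge0 (t / 2); lra.
  case: (Sx) => u [hu ex]; case: (Sy) => v [hv ey].
  have [a aA ha] := approx u hu; have [b bA hb] := approx v hv.
  exists ((Num.sqrt 2)^-1 *: (a + b)).
    by rewrite mem_cat; apply/orP; right; apply: allpairs_f.
  have nxy : l2norm (x + y) = Num.sqrt 2.
    rewrite /l2norm inner_addE xy (S1_unit Sx) (S1_unit Sy); congr Num.sqrt; ring.
  rewrite nxy.
  rewrite /sqd.
  have -> : (Num.sqrt 2)^-1 *: (x + y) - (Num.sqrt 2)^-1 *: (a + b) =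
      (Num.sqrt 2)^-1 *: ((x - a) + (y - b)).
    by apply/rowP => j; rewrite !mxE; ring.
  rewrite inner_scale exprVn sqr_sqrtr // mulrC ler_pdivrMr //.
  have hp := inner_par (x - a) (y - b).
  rewrite -ex /sqd in ha; rewrite -ey /sqd in hb.
  lra.
rewrite lee_fin size_cat size_allpairs size_map /T size_tups natrD natrM natrX.
set w := t^-1.
have w0 : 0 < w by rewrite invr_gt0.
have tw : t * w = 1 by rewrite mulfV // lt0r_neq0.
have hb : 1 + 2 / e <= 6 * K * w.
  have -> : 2 / e = 4 * K * w by rewrite /e /w; field; apply/andP; split; apply: lt0r_neq0.
  nra.
have hP : (size P)%:R <= (6 * K * w) ^+ n.
  apply: (le_trans Ps); apply: powle => //.
  by rewrite addr_ge0 // divr_ge0 // ltW.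
have hM : (size P)%:R ^+ kappa <= X.
  rewrite /X -/K -/w mulnC exprM; apply: powle => //.
have M0 : 0 <= (size P)%:R ^+ kappa :> R by rewrite exprn_ge0.
set M := (size P)%:R ^+ kappa in hM M0 *.
rewrite expr2; nra.
Qed.

End Vol.

Local Close Scope classical_set_scope.

Theorem lemma1 (R : realType) (n kappa : nat) (t : R) :
  (1 <= n)%N -> (1 <= kappa)%N -> 0 < t ->
  (covering_number (@S12 R n kappa) t <=
   ((((6 * kappa%:R) / t) ^+ (kappa * n) + 1) ^+ 2)%:E)%E.
Proof. exact: main. Qed.
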